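(* Let $n\ge 1$, $a<b$, and let $f,g:[a,b]\to\mathbb{R}$ be $n$-times differentiable on $[a,b]$ with $g^{(n)}(a)\neq g^{(n)}(b)$. Then there exists $\eta\in(a,b)$ such that $$f(a)-T_n(f,\eta)(a)=\frac{f^{(n)}(b)-f^{(n)}(a)}{g^{(n)}(b)-g^{(n)}(a)}\cdot\bigl[g(a)-T_n(g,\eta)(a)\bigr].$$
   Context: $n$-times differentiable on $[a,b]$ means $n$-times differentiable on $(a,b)$ with the corresponding one-sided derivatives existing at the endpoints. $T_n(h,x_0)(x)=\sum_{k=0}^n \frac{h^{(k)}(x_0)}{k!}(x-x_0)^k$ denotes the $n$-th Taylor polynomial of $h$ at $x_0$, evaluated at $x$. *)

(* Defs.v *)
From Stdlib Require Import Reals Factorial.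
From Coquelicot Require Import Coquelicot.
Open Scope R_scope.

(* At interior points this is the usual two-sided derivative; at a (resp. b)
   it is the right (resp. left) one-sided derivative. *)
Definition derive_within (a b : R) (h : R -> R) (x l : R) : Prop :=
  filterlim (fun y => (h y - h x) / (y - x))
    (within (fun y => a <= y <= b /\ y <> x) (locally x)) (locally l).

Definition nth_derivs_on (n : nat) (a b : R) (f : R -> R) (F : nat -> R -> R)
  : Prop :=
  (forall x, a <= x <= b -> F 0%nat x = f x) /\
  (forall k x, (k < n)%nat -> a <= x <= b -> derive_within a b (F k) x (F (S k) x)).

Definition taylor (n : nat) (F : nat -> R -> R) (x0 x : R) : R :=
  sum_f_R0 (fun k => F k x0 / INR (Factorial.fact k) * (x - x0) ^ k) n.

(* Main.v *)
Require Import Defs.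
From Stdlib Require Import Reals Lra Lia Factorial.
From Coquelicot Require Import Coquelicot.
Open Scope R_scope.

Section L.
Context {T : Type} {F : (T -> Prop) -> Prop} {FF : Filter F}.
Lemma lim_plus (f g : T -> R) x y : filterlim f F (locally x) -> filterlim g F (locally y) ->
  filterlim (fun t => f t + g t) F (locally (x + y)).
Proof. intros Hf Hg. apply (filterlim_comp_2 f g Rplus Hf Hg). exact (filterlim_plus x y). Qed.
Lemma lim_mult (f g : T -> R) x y : filterlim f F (locally x) -> filterlim g F (locally y) ->
  filterlim (fun t => f t * g t) F (locally (x * y)).
Proof. intros Hf Hg. apply (filterlim_comp_2 f g Rmult Hf Hg). exact (filterlim_mult x y). Qed.
End L.

Definition W a b x := within (fun y => a <= y <= b /\ y <> x) (locally x).

Lemma dw_ed a b h x l : derive_within a b h x l -> forall eps, 0 < eps -> exists d, 0 < d /\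
  forall y, a <= y <= b -> y <> x -> Rabs (y - x) < d -> Rabs ((h y - h x)/(y - x) - l) < eps.
Proof.
  intros H eps He. unfold derive_within in H.
  specialize (H (ball l eps) (locally_ball l (mkposreal _ He))).
  destruct H as [[d Hd] Hd']. exists d. split. exact Hd.
  intros y Hy Hyx Hyd. apply (Hd' y). exact Hyd. auto.
Qed.

Lemma lim_y a b x : filterlim (fun y => y) (W a b x) (locally x).
Proof. eapply filterlim_filter_le_1. apply filter_le_within. apply filterlim_id. Qed.

Lemma dw_cont a b h x l : derive_within a b h x l -> filterlim h (W a b x) (locally (h x)).
Proof.
  intro H.
  assert (H2 : filterlim (fun y => h x + (h y - h x)/(y - x) * (y + - x)) (W a b x) (locally (h x + l * (x + - x)))).
  { apply lim_plus. apply filterlim_const. apply lim_mult. exact H. apply lim_plus. apply lim_y. apply filterlim_const. }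
  replace (h x + l * (x + - x)) with (h x) in H2 by ring.
  eapply filterlim_ext_loc; [|exact H2].
  exists (mkposreal _ Rlt_0_1). intros y _ [_ Hy]. simpl. field. intro E. apply Hy. lra.
Qed.

Lemma dw_plus a b f g x lf lg : derive_within a b f x lf -> derive_within a b g x lg ->
  derive_within a b (fun y => f y + g y) x (lf + lg).
Proof.
  intros Hf Hg. unfold derive_within.
  eapply filterlim_ext; [|exact (lim_plus _ _ _ _ Hf Hg)].
  intro y. simpl. unfold Rdiv. ring.
Qed.

Lemma dw_mult a b f g x lf lg : derive_within a b f x lf -> derive_within a b g x lg ->
  derive_within a b (fun y => f y * g y) x (lf * g x + f x * lg).
Proof.
  intros Hf Hg. unfold derive_within.
  pose proof (dw_cont _ _ _ _ _ Hg) as Hc.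
  eapply filterlim_ext; [|exact (lim_plus _ _ _ _ (lim_mult _ _ _ _ Hf Hc) (lim_mult _ _ _ _ (filterlim_const (f x)) Hg))].
  intro y. simpl. unfold Rdiv. ring.
Qed.

Lemma dw_const a b c x : derive_within a b (fun _ => c) x 0.
Proof.
  unfold derive_within. eapply filterlim_ext; [|exact (filterlim_const (F := W a b x) 0)].
  intro y. simpl. unfold Rdiv. ring.
Qed.

Lemma dw_id a b x : derive_within a b (fun y => y) x 1.
Proof.
  unfold derive_within. eapply filterlim_ext_loc; [|exact (filterlim_const (F := W a b x) 1)].
  exists (mkposreal _ Rlt_0_1). intros y _ [_ Hy]. simpl. field. intro E; apply Hy; lra.
Qed.

Lemma dw_ext a b f g x l : (forall y, a <= y <= b -> f y = g y) -> a <= x <= b ->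
  derive_within a b f x l -> derive_within a b g x l.
Proof.
  intros He Hx H. unfold derive_within. eapply filterlim_ext_loc; [|exact H].
  exists (mkposreal _ Rlt_0_1). intros y _ [Hy _]. simpl. rewrite !He; auto.
Qed.

Lemma dw_eq a b f x l l' : l = l' -> derive_within a b f x l -> derive_within a b f x l'.
Proof. intros ->; auto. Qed.

Lemma dw_ext_all a b f g x l : (forall y, f y = g y) -> derive_within a b f x l -> derive_within a b g x l.
Proof.
  intros He H. unfold derive_within. eapply filterlim_ext; [|exact H]. intro y. simpl. rewrite !He; auto.
Qed.

Lemma dw_scal a b f x l c : derive_within a b f x l -> derive_within a b (fun y => c * f y) x (c * l).
Proof. intro H. pose proof (dw_mult _ _ _ _ _ _ _ (dw_const a b c x) H) as H2. eapply dw_eq; [|exact H2]. cbv beta; ring. Qed.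

Lemma dw_minus a b f g x lf lg : derive_within a b f x lf -> derive_within a b g x lg ->
  derive_within a b (fun y => f y - g y) x (lf - lg).
Proof.
  intros Hf Hg. pose proof (dw_plus _ _ _ _ _ _ _ Hf (dw_scal _ _ _ _ _ (-1) Hg)) as H.
  eapply dw_ext_all with (f := fun y => f y + -1 * g y). intro; simpl; ring.
  eapply dw_eq; [|exact H]. ring.
Qed.

Lemma dw_lin a b c s x : derive_within a b (fun y => s * (y - c)) x s.
Proof.
  pose proof (dw_scal _ _ _ _ _ s (dw_minus _ _ _ _ _ _ _ (dw_id a b x) (dw_const a b c x))) as H.
  eapply dw_eq; [|exact H]. ring.
Qed.

Lemma dw_pow a b c s x k : derive_within a b (fun y => (s * (y - c)) ^ S k) x (INR (S k) * s * (s * (x - c)) ^ k).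
Proof.
  induction k.
  - eapply dw_ext_all with (f := fun y => s * (y - c)). intro; simpl; ring.
    eapply dw_eq; [|exact (dw_lin a b c s x)]. simpl; ring.
  - pose proof (dw_mult _ _ _ _ _ _ _ (dw_lin a b c s x) IHk) as H.
    eapply dw_ext_all with (f := fun y => s * (y - c) * (s * (y - c)) ^ S k). intro; simpl; ring.
    eapply dw_eq; [|exact H]. rewrite !S_INR. simpl. ring.
Qed.

Lemma fermat_max a b g x l x1 x2 : a <= x1 -> x1 < x -> x < x2 -> x2 <= b ->
  derive_within a b g x l -> (forall y, x1 <= y <= x2 -> g y <= g x) -> l = 0.
Proof.
  intros H1 H2 H3 H4 Hd Hm.
  destruct (Rtotal_order l 0) as [Hl|[Hl|Hl]]; auto; exfalso.
  - destruct (dw_ed _ _ _ _ _ Hd (-l/2)) as [d [Hd0 Hdy]]. lra.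
    set (y := x - Rmin d (x - x1) / 2).
    assert (Hm1 : 0 < Rmin d (x - x1)) by (apply Rmin_glb_lt; lra).
    assert (Hm2 : Rmin d (x - x1) <= d) by apply Rmin_l.
    assert (Hm3 : Rmin d (x - x1) <= x - x1) by apply Rmin_r.
    specialize (Hdy y). assert (Hq : Rabs ((g y - g x) / (y - x) - l) < - l / 2).
    { apply Hdy; unfold y; [lra| lra| rewrite Rabs_left; lra]. }
    assert (E : g y - g x = (g y - g x) / (y - x) * (y - x)) by (field; unfold y; lra).
    set (Q := (g y - g x) / (y - x)) in *.
    assert (Q < l/2) by (apply Rabs_def2 in Hq; lra).
    assert (g y <= g x) by (apply Hm; unfold y; lra).
    assert (y - x < 0) by (unfold y; lra). nra.
  - destruct (dw_ed _ _ _ _ _ Hd (l/2)) as [d [Hd0 Hdy]]. lra.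
    set (y := x + Rmin d (x2 - x) / 2).
    assert (Hm1 : 0 < Rmin d (x2 - x)) by (apply Rmin_glb_lt; lra).
    assert (Hm2 : Rmin d (x2 - x) <= d) by apply Rmin_l.
    assert (Hm3 : Rmin d (x2 - x) <= x2 - x) by apply Rmin_r.
    specialize (Hdy y). assert (Hq : Rabs ((g y - g x) / (y - x) - l) < l / 2).
    { apply Hdy; unfold y; [lra| lra| rewrite Rabs_right; lra]. }
    assert (E : g y - g x = (g y - g x) / (y - x) * (y - x)) by (field; unfold y; lra).
    set (Q := (g y - g x) / (y - x)) in *.
    assert (Q > l/2) by (apply Rabs_def2 in Hq; lra).
    assert (g y <= g x) by (apply Hm; unfold y; lra).
    assert (y - x > 0) by (unfold y; lra). nra.
Qed.

Lemma endpoint_max a b g l x1 : a <= x1 -> x1 < b ->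
  derive_within a b g b l -> (forall y, x1 <= y <= b -> g y <= g b) -> 0 <= l.
Proof.
  intros H1 H2 Hd Hm.
  destruct (Rle_or_lt 0 l) as [Hl|Hl]; auto; exfalso.
  destruct (dw_ed _ _ _ _ _ Hd (-l/2)) as [d [Hd0 Hdy]]. lra.
  set (x := b). set (y := x - Rmin d (x - x1) / 2).
  assert (Hm1 : 0 < Rmin d (x - x1)) by (apply Rmin_glb_lt; unfold x; lra).
  assert (Hm2 : Rmin d (x - x1) <= d) by apply Rmin_l.
  assert (Hm3 : Rmin d (x - x1) <= x - x1) by apply Rmin_r.
  specialize (Hdy y). assert (Hq : Rabs ((g y - g x) / (y - x) - l) < - l / 2).
  { apply Hdy; unfold y, x in *; [lra| lra| rewrite Rabs_left; lra]. }
  assert (E : g y - g x = (g y - g x) / (y - x) * (y - x)) by (field; unfold y; lra).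
  set (Q := (g y - g x) / (y - x)) in *.
  assert (Q < l/2) by (apply Rabs_def2 in Hq; lra).
  assert (g y <= g x) by (apply Hm; unfold y, x in *; lra).
  assert (y - x < 0) by (unfold y; lra). nra.
Qed.

Definition clamp a b y := Rmax a (Rmin b y).

Lemma clamp_id a b y : a <= y <= b -> clamp a b y = y.
Proof. intros. unfold clamp, Rmax, Rmin. repeat destruct Rle_dec; lra. Qed.

Lemma clamp_in a b y : a <= b -> a <= clamp a b y <= b.
Proof. intros. unfold clamp, Rmax, Rmin. repeat destruct Rle_dec; lra. Qed.

Lemma clamp_lip a b y z : a <= b -> Rabs (clamp a b y - clamp a b z) <= Rabs (y - z).
Proof.
  intros. unfold clamp, Rmax, Rmin. repeat destruct Rle_dec;
  unfold Rabs; repeat destruct Rcase_abs; lra.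
Qed.

Lemma dw_cont_ed a b g x l : derive_within a b g x l -> forall eps, 0 < eps -> exists d, 0 < d /\
  forall y, a <= y <= b -> Rabs (y - x) < d -> Rabs (g y - g x) < eps.
Proof.
  intros Hd eps He.
  destruct (dw_ed _ _ _ _ _ Hd 1 Rlt_0_1) as [d [Hd0 Hdy]].
  assert (HL : 0 < Rabs l + 1) by (pose proof (Rabs_pos l); lra).
  exists (Rmin d (eps / (Rabs l + 1))). split.
  { apply Rmin_glb_lt; auto. apply Rdiv_lt_0_compat; lra. }
  intros y Hy Hyx.
  assert (Hm2 := Rmin_l d (eps / (Rabs l + 1))). assert (Hm3 := Rmin_r d (eps / (Rabs l + 1))).
  destruct (Req_dec y x) as [->|Hne]. { rewrite Rminus_diag, Rabs_R0. lra. }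
  specialize (Hdy y Hy Hne ltac:(lra)).
  assert (E : g y - g x = (g y - g x) / (y - x) * (y - x)) by (field; lra).
  set (Q := (g y - g x) / (y - x)) in *.
  assert (Hq : Rabs Q <= Rabs l + 1).
  { replace Q with ((Q - l) + l) by ring. eapply Rle_trans. apply Rabs_triang. lra. }
  rewrite E, Rabs_mult.
  assert (Rabs (y - x) < eps / (Rabs l + 1)) by lra.
  assert (Rabs Q * Rabs (y - x) <= (Rabs l + 1) * Rabs (y - x)) by (apply Rmult_le_compat_r; auto; apply Rabs_pos).
  assert ((Rabs l + 1) * Rabs (y - x) < (Rabs l + 1) * (eps / (Rabs l + 1))) by (apply Rmult_lt_compat_l; lra).
  replace ((Rabs l + 1) * (eps / (Rabs l + 1))) with eps in * by (field; lra). lra.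
Qed.

Lemma cont_clamp a b g : a <= b -> (forall y, a <= y <= b -> exists l, derive_within a b g y l) ->
  forall z, continuity_pt (fun y => g (clamp a b y)) z.
Proof.
  intros Hab Hd z. unfold continuity_pt, continue_in, limit1_in, limit_in. simpl. unfold R_dist.
  intros eps He.
  destruct (Hd (clamp a b z) (clamp_in a b z Hab)) as [l Hl].
  destruct (dw_cont_ed _ _ _ _ _ Hl eps He) as [d [Hd0 Hdy]].
  exists d. split; auto. intros y [_ Hy].
  apply Hdy. apply clamp_in; auto. eapply Rle_lt_trans. apply clamp_lip; auto. auto.
Qed.

Lemma rolle_dw a b g g' x1 x2 : a <= x1 -> x1 < x2 -> x2 <= b ->
  (forall y, a <= y <= b -> derive_within a b g y (g' y)) -> g x1 = g x2 ->
  exists y, x1 < y < x2 /\ g' y = 0.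
Proof.
  intros H1 H2 H3 Hd He.
  assert (Hc : forall z, continuity_pt (fun y => g (clamp a b y)) z).
  { apply cont_clamp. lra. intros y Hy; exists (g' y); auto. }
  assert (Hcl : forall y, x1 <= y <= x2 -> g (clamp a b y) = g y) by (intros; rewrite clamp_id; auto; lra).
  destruct (continuity_ab_maj _ x1 x2 ltac:(lra) (fun c _ => Hc c)) as [M [HM HMr]].
  destruct (continuity_ab_min _ x1 x2 ltac:(lra) (fun c _ => Hc c)) as [m [Hm Hmr]].
  rewrite Hcl in HM, Hm by auto.
  destruct (Rlt_or_le (g x1) (g M)) as [HgM|HgM].
  - exists M. assert (M <> x1) by (intro; subst; lra). assert (M <> x2) by (intro; subst; lra).
    split. lra. apply (fermat_max a b g M (g' M) x1 x2); try lra. apply Hd; lra.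
    intros y Hy. specialize (HM y Hy). rewrite !Hcl in HM by auto. auto.
  - destruct (Rlt_or_le (g m) (g x1)) as [Hgm|Hgm].
    + exists m. assert (m <> x1) by (intro; subst; lra). assert (m <> x2) by (intro; subst; lra).
      split. lra.
      assert (- g' m = 0); [|lra].
      apply (fermat_max a b (fun y => - g y) m (- g' m) x1 x2); try lra.
      eapply dw_ext_all with (f := fun y => 0 - g y). intro; ring.
      eapply dw_eq; [|apply dw_minus; [apply dw_const| apply Hd; lra]]. ring.
      intros y Hy. specialize (Hm y Hy). rewrite !Hcl in Hm by auto. lra.
    + exists ((x1 + x2)/2). split. lra.
      apply (fermat_max a b g ((x1+x2)/2) (g' ((x1+x2)/2)) x1 x2); try lra. apply Hd; lra.
      intros y Hy. specialize (HM y Hy). rewrite Hcl in HM by auto.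
      specialize (Hm ((x1+x2)/2) ltac:(lra)). rewrite Hcl in Hm by lra. lra.
Qed.

Lemma mvt_bound a b g g' x1 x2 M : a <= x1 -> x1 < x2 -> x2 <= b ->
  (forall y, a <= y <= b -> derive_within a b g y (g' y)) ->
  (forall y, x1 < y < x2 -> Rabs (g' y) <= M) -> Rabs (g x2 - g x1) <= M * (x2 - x1).
Proof.
  intros H1 H2 H3 Hd HM.
  set (s := (g x2 - g x1) / (x2 - x1)).
  destruct (rolle_dw a b (fun y => g y - s * (y - x1)) (fun y => g' y - s) x1 x2) as [y [Hy Hy0]]; auto.
  - intros y Hy. apply dw_minus. auto. apply dw_lin.
  - unfold s. field. lra.
  - assert (E : g x2 - g x1 = s * (x2 - x1)) by (unfold s; field; lra).
    rewrite E, Rabs_mult, (Rabs_right (x2 - x1)) by lra.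
    apply Rmult_le_compat_r. lra. replace s with (g' y) by lra. auto.
Qed.

Lemma fact_pos' k : 0 < INR (fact k).
Proof. apply lt_0_INR. apply lt_O_fact. Qed.

Lemma dT a b n U m t : (forall k x, (k < n)%nat -> a <= x <= b -> derive_within a b (U k) x (U (S k) x)) ->
  (m < n)%nat -> a <= t <= b ->
  derive_within a b (fun t => taylor m U t a) t (U (S m) t / INR (fact m) * (a - t) ^ m).
Proof.
  intros HU. induction m; intros Hm Ht.
  - unfold taylor. simpl.
    eapply dw_ext_all with (f := fun t => U 0%nat t). intro; simpl; field.
    eapply dw_eq; [|apply HU; auto]. field.
  - unfold taylor. simpl sum_f_R0. fold (taylor m U t a).
    assert (IH := IHm ltac:(lia) Ht).
    assert (H1 := HU (S m) t Hm Ht).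
    assert (H2 := dw_pow a b a (-1) t m).
    assert (H3 := dw_mult _ _ _ _ _ _ _ (dw_scal _ _ _ _ _ (/ INR (fact (S m))) H1) H2).
    assert (H4 := dw_plus _ _ _ _ _ _ _ IH H3).
    eapply dw_ext_all. 2: eapply dw_eq; [|exact H4].
    + intro y. cbv beta. unfold taylor.
      change (sum_f_R0 ?f (S m)) with (sum_f_R0 f m + f (S m)). cbv beta.
      replace ((-1*(y-a))^S m) with ((a-y)^S m) by (f_equal; ring). change (fact m + m * fact m)%nat with (fact (S m)). change ((a-y)*(a-y)^m) with ((a-y)^S m). unfold Rdiv; ring.
    + cbv beta. replace ((-1 * (t - a)) ^ S m) with ((a - t) ^ S m) by (f_equal; ring).
      replace ((-1 * (t - a)) ^ m) with ((a - t) ^ m) by (f_equal; ring).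
      change (fact (S m)) with ((S m) * fact m)%nat. rewrite mult_INR.
      pose proof (fact_pos' m). pose proof (pos_INR m). rewrite S_INR in *. simpl pow.
      field. split; lra.
Qed.

Lemma taylor_at a m U : taylor m U a a = U 0%nat a.
Proof. induction m; unfold taylor in *. simpl. field. change (sum_f_R0 ?f (S m)) with (sum_f_R0 f m + f (S m)). cbv beta. rewrite IHm. simpl. unfold Rdiv. ring. Qed.

Lemma dw_powk a b c x k : derive_within a b (fun y => (c - y)^k) x (- INR k * (c - x)^(pred k)).
Proof.
  destruct k.
  - eapply dw_ext_all with (f := fun _ => 1). intro; simpl; ring.
    eapply dw_eq; [|apply dw_const]. simpl; ring.
  - eapply dw_ext_all with (f := fun y => (-1 * (y - c)) ^ S k). intro; f_equal; ring.
    eapply dw_eq; [|apply dw_pow]. simpl pred. replace (-1 * (x - c)) with (c - x) by ring. ring.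
Qed.

Lemma abs_pow_pos a t k : a <= t -> Rabs ((a - t) ^ k) = (t - a) ^ k.
Proof. intro. rewrite <- RPow_abs. f_equal. rewrite Rabs_left1 by lra. ring. Qed.

Lemma inv_fact_le1 k : / INR (fact k) <= 1.
Proof.
  pose proof (fact_pos' k). assert (1 <= INR (fact k)).
  { replace 1 with (INR 1) by reflexivity. apply le_INR. pose proof (lt_O_fact k). lia. }
  rewrite <- Rinv_1. apply Rinv_le_contravar; lra.
Qed.

Lemma peano a b m U : a < b ->
  (forall k x, (k < S m)%nat -> a <= x <= b -> derive_within a b (U k) x (U (S k) x)) ->
  forall eps, 0 < eps -> exists d, 0 < d /\ forall t, a < t -> t < a + d -> t <= b ->
  Rabs (U 0%nat a - taylor m U t a - U (S m) a / INR (fact (S m)) * (a - t)^(S m)) <= eps * (t - a)^(S m).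
Proof.
  intros Hab HU eps He.
  set (c0 := U (S m) a).
  assert (Hm1 : 0 < INR m + 1) by (pose proof (pos_INR m); lra).
  set (e' := eps / (INR m + 1)).
  assert (He' : 0 < e') by (unfold e'; apply Rdiv_lt_0_compat; lra).
  destruct (dw_ed _ _ _ _ _ (HU m a ltac:(lia) ltac:(lra)) e' He') as [d [Hd Hdy]].
  exists d. split; auto. intros t Ht1 Ht2 Ht3.
  set (phi := fun y => U m y - U m a - c0 * (y - a)).
  assert (Hphi : forall y, a < y <= t -> Rabs (phi y) <= e' * (y - a)).
  { intros y Hy. assert (Hq := Hdy y ltac:(lra) ltac:(lra) ltac:(rewrite Rabs_right; lra)).
    replace (phi y) with (((U m y - U m a) / (y - a) - U (S m) a) * (y - a)) by (unfold phi, c0; field; lra).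
    rewrite Rabs_mult, (Rabs_right (y - a)) by lra. apply Rmult_le_compat_r; lra. }
  set (E := fun y => U 0%nat a - taylor m U y a - c0 / INR (fact (S m)) * (a - y)^(S m) + / INR (fact m) * (a - y)^m * phi y).
  set (E' := fun y => - INR m * (a - y)^(pred m) / INR (fact m) * phi y).
  assert (HE : forall y, a <= y <= b -> derive_within a b E y (E' y)).
  { intros y Hy.
    assert (H1 := dw_minus _ _ _ _ _ _ _ (dw_minus _ _ _ _ _ _ _ (dw_const a b (U 0%nat a) y) (dT a b (S m) U m y HU ltac:(lia) Hy))
                   (dw_scal _ _ _ _ _ (c0 / INR (fact (S m))) (dw_powk a b a y (S m)))).
    assert (Hp := dw_minus _ _ _ _ _ _ _ (dw_minus _ _ _ _ _ _ _ (HU m y ltac:(lia) Hy) (dw_const a b (U m a) y)) (dw_lin a b a c0 y)).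
    assert (H2 := dw_mult _ _ _ _ _ _ _ (dw_scal _ _ _ _ _ (/ INR (fact m)) (dw_powk a b a y m)) Hp).
    assert (H3 := dw_plus _ _ _ _ _ _ _ H1 H2).
    eapply dw_ext_all with (f := fun y => _). 2: eapply dw_eq; [|exact H3].
    intro z. unfold E, phi. reflexivity.
    unfold E', phi, c0. cbv beta. simpl pred.
    change (fact (S m)) with ((S m) * fact m)%nat. rewrite mult_INR.
    pose proof (fact_pos' m). rewrite S_INR. simpl pow. field. lra. }
  assert (Hb : forall s, a < s < t -> Rabs (E' s) <= INR m * e' * (t - a)^m).
  { intros s Hs. unfold E'. destruct m as [|j].
    - simpl. replace (- 0 * 1 / 1 * phi s) with 0 by field. rewrite Rabs_R0. lra.
    - simpl pred. unfold Rdiv. rewrite !Rabs_mult, Rabs_Ropp, abs_pow_pos by lra.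
      rewrite (Rabs_right (INR (S j))) by (apply Rle_ge, pos_INR).
      rewrite (Rabs_right (/ INR (fact (S j)))) by (apply Rle_ge, Rlt_le, Rinv_0_lt_compat, fact_pos').
      assert (H1 := Hphi s ltac:(lra)). assert (H2 := inv_fact_le1 (S j)).
      assert (H3 : (s - a)^j * (s - a) <= (t - a)^S j).
      { rewrite Rmult_comm. change ((s - a) * (s - a)^j) with ((s - a)^S j). apply pow_incr. lra. }
      assert (H4 : 0 <= (s - a)^j) by (apply pow_le; lra).
      assert (H5 : 0 <= INR (S j)) by apply pos_INR.
      assert (H6 : 0 <= Rabs (phi s)) by apply Rabs_pos.
      assert (H7 : 0 < / INR (fact (S j))) by (apply Rinv_0_lt_compat, fact_pos').
      assert (H8 : (s - a) ^ j * / INR (fact (S j)) * Rabs (phi s) <= (s - a)^j * 1 * (e' * (s - a))).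
      { apply Rmult_le_compat; try nra. }
      assert (H9 : (s - a) ^ j * 1 * (e' * (s - a)) <= e' * (t - a)^S j) by nra.
      nra. }
  assert (HM := mvt_bound a b E E' a t _ ltac:(lra) Ht1 Ht3 HE Hb).
  assert (HEa : E a = 0).
  { unfold E, phi. rewrite taylor_at. rewrite Rminus_diag. simpl. destruct m; simpl; ring. }
  rewrite HEa, Rminus_0_r in HM.
  assert (Hpt := Hphi t ltac:(lra)).
  assert (X : U 0%nat a - taylor m U t a - c0 / INR (fact (S m)) * (a - t) ^ S m = E t - / INR (fact m) * (a - t)^m * phi t)
    by (unfold E, c0; ring).
  rewrite X. unfold Rminus at 1. eapply Rle_trans. apply Rabs_triang. rewrite Rabs_Ropp.
  rewrite Rabs_mult, Rabs_mult, abs_pow_pos by lra.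
  rewrite (Rabs_right (/ INR (fact m))) by (apply Rle_ge, Rlt_le, Rinv_0_lt_compat, fact_pos').
  assert (H2 := inv_fact_le1 m). assert (H4 : 0 <= (t - a)^m) by (apply pow_le; lra).
  assert (H6 : 0 <= Rabs (phi t)) by apply Rabs_pos.
  assert (H7 : 0 < / INR (fact m)) by (apply Rinv_0_lt_compat, fact_pos').
  assert (H8 : / INR (fact m) * (t - a) ^ m * Rabs (phi t) <= 1 * (t - a)^m * (e' * (t - a))).
  { apply Rmult_le_compat; try nra. }
  replace eps with ((INR m + 1) * e') by (unfold e'; field; lra).
  change ((t - a)^S m) with ((t - a) * (t - a)^m). nra.
Qed.

Definition Sf a m U t := U 0%nat a - taylor m U t a.
Definition hf a m U t := Sf a m U t / (t - a)^(S m).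
Definition pd a m U K y := -(U (S m) y / INR (fact m) * (a - y)^m) - K * (INR (S m) * 1 * (1*(y - a))^m).
Definition Rf a m U y := U 0%nat a - taylor (S m) U y a.

Section Core.
Variables (a b : R) (m : nat) (U : nat -> R -> R).
Hypothesis Hab : a < b.
Hypothesis HU : forall k x, (k < S m)%nat -> a <= x <= b -> derive_within a b (U k) x (U (S k) x).

Lemma dP K y : a <= y <= b ->
  derive_within a b (fun y => Sf a m U y - K * (1 * (y - a))^(S m)) y (pd a m U K y).
Proof.
  intro Hy. unfold Sf, pd.
  assert (H := dw_minus _ _ _ _ _ _ _ (dw_minus _ _ _ _ _ _ _ (dw_const a b (U 0%nat a) y) (dT a b (S m) U m y HU ltac:(lia) Hy))
     (dw_scal _ _ _ _ _ K (dw_pow a b a 1 y m))).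
  eapply dw_eq; [|exact H]. ring.
Qed.

Lemma Rf_ident K y : a < y -> Sf a m U y = K * (y - a)^(S m) ->
  Rf a m U y = -(y - a) / INR (S m) * pd a m U K y.
Proof.
  intros Hy HS. unfold Rf, pd. unfold taylor at 1.
  change (sum_f_R0 ?f (S m)) with (sum_f_R0 f m + f (S m)). cbv beta. fold (taylor m U y a).
  replace (U 0%nat a - (taylor m U y a + U (S m) y / INR (fact (S m)) * (a - y) ^ S m))
    with (Sf a m U y - U (S m) y / INR (fact (S m)) * (a - y) ^ S m) by (unfold Sf; ring).
  rewrite HS. change (fact (S m)) with ((S m) * fact m)%nat. rewrite mult_INR.
  pose proof (fact_pos' m). pose proof (pos_INR m). rewrite S_INR. simpl pow.
  replace (1 * (y - a)) with (y - a) by ring. field. lra.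
Qed.

Lemma S_cont : forall z, continuity_pt (fun y => Sf a m U (clamp a b y)) z.
Proof.
  apply cont_clamp. lra. intros y Hy. eexists. unfold Sf.
  exact (dw_minus _ _ _ _ _ _ _ (dw_const a b (U 0%nat a) y) (dT a b (S m) U m y HU ltac:(lia) Hy)).
Qed.

Lemma P_cont : forall z, continuity_pt (fun y => (1 * (clamp a b y - a))^(S m)) z.
Proof.
  apply (cont_clamp a b (fun y => (1 * (y - a))^(S m))). lra. intros y Hy. eexists. apply dw_pow.
Qed.

Lemma peano_h : forall eps, 0 < eps -> exists d, 0 < d /\ forall t, a < t -> t < a + d -> t <= b ->
  Rabs (hf a m U t - U (S m) a / INR (fact (S m)) * (-1)^(S m)) <= eps.
Proof.
  intros eps He. destruct (peano a b m U Hab HU eps He) as [d [Hd H]]. exists d. split; auto.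
  intros t H1 H2 H3. specialize (H t H1 H2 H3).
  assert (Hp : 0 < (t - a)^(S m)) by (apply pow_lt; lra).
  replace ((a - t)^(S m)) with ((-1)^(S m) * (t - a)^(S m)) in H by (rewrite <- Rpow_mult_distr; f_equal; ring).
  unfold hf, Sf.
  replace (U 0%nat a - taylor m U t a - U (S m) a / INR (fact (S m)) * ((-1) ^ S m * (t - a) ^ S m))
    with ((t - a)^(S m) * ((U 0%nat a - taylor m U t a) / (t - a) ^ S m - U (S m) a / INR (fact (S m)) * (-1) ^ S m)) in H
    by (field; split; [apply Rgt_not_eq, fact_pos'|lra]).
  rewrite Rabs_mult, Rabs_right in H by lra.
  apply Rmult_le_reg_l with ((t - a)^(S m)); lra.
Qed.

Hypothesis Hend : U (S m) a = U (S m) b.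

Let L := U (S m) a / INR (fact (S m)) * (-1)^(S m).

Lemma core s : s * s = 1 -> (exists t0, a < t0 <= b /\ s * hf a m U t0 > s * L) ->
  exists eta, a < eta < b /\ Rf a m U eta = 0.
Proof.
  intros Hs [t0 [Ht0 Hg]].
  assert (Hsa : Rabs s = 1).
  { destruct (Rle_or_lt 0 s). rewrite Rabs_right by lra. nra. rewrite Rabs_left by lra. nra. }
  set (eps := (s * hf a m U t0 - s * L) / 2).
  destruct (peano_h eps ltac:(unfold eps; lra)) as [d [Hd Hh]].
  set (a' := a + Rmin d (t0 - a) / 2).
  assert (Hm1 : 0 < Rmin d (t0 - a)) by (apply Rmin_glb_lt; lra).
  assert (Hm2 := Rmin_l d (t0 - a)). assert (Hm3 := Rmin_r d (t0 - a)).
  assert (Ha' : s * hf a m U a' < s * hf a m U t0).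
  { assert (H := Hh a' ltac:(unfold a'; lra) ltac:(unfold a'; lra) ltac:(unfold a'; lra)).
    assert (Rabs (s * hf a m U a' - s * L) <= eps).
    { replace (s * hf a m U a' - s * L) with (s * (hf a m U a' - L)) by ring.
      rewrite Rabs_mult, Hsa. unfold L. lra. }
    assert (X := Rle_abs (s * hf a m U a' - s * L)). unfold eps in *. lra. }
  set (G := fun y => s * Sf a m U (clamp a b y) * / (1 * (clamp a b y - a))^(S m)).
  assert (HG : forall y, a' <= y <= b -> G y = s * hf a m U y).
  { intros y Hy. unfold G, hf. rewrite clamp_id by (unfold a' in *; lra). unfold Rdiv.
    replace (1 * (y - a)) with (y - a) by ring. ring. }
  assert (HGc : forall c, a' <= c <= b -> continuity_pt G c).
  { intros c Hc. unfold G.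
    apply (continuity_pt_mult (fun y => s * Sf a m U (clamp a b y)) (fun y => / (1 * (clamp a b y - a))^(S m))).
    apply (continuity_pt_scal (fun y => Sf a m U (clamp a b y))). apply S_cont.
    apply (continuity_pt_inv (fun y => (1 * (clamp a b y - a))^(S m))). apply P_cont.
    rewrite clamp_id by (unfold a' in *; lra). apply pow_nonzero. unfold a' in *; lra. }
  destruct (continuity_ab_maj G a' b ltac:(unfold a' in *; lra) HGc) as [M [HM HMr]].
  assert (HGM : s * hf a m U t0 <= G M) by (rewrite <- (HG t0) by (unfold a'; lra); apply HM; unfold a'; lra).
  rewrite HG in HGM by auto.
  assert (HMa : a' < M). { destruct (Req_dec M a'). subst M. lra. lra. }
  set (K := hf a m U M).
  assert (HSM : forall y, a < y -> Sf a m U y = hf a m U y * (y - a)^(S m)).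
  { intros y Hy. unfold hf. field. apply pow_nonzero. lra. }
  set (p := fun y => s * (Sf a m U y - K * (1 * (y - a))^(S m))).
  assert (Hp : forall y, a <= y <= b -> derive_within a b p y (s * pd a m U K y)).
  { intros y Hy. apply dw_scal. apply dP. auto. }
  assert (Hpm : forall y, a' <= y <= b -> p y <= p M).
  { intros y Hy. unfold p. replace (1 * (y - a)) with (y - a) by ring. replace (1 * (M - a)) with (M - a) by ring.
    rewrite (HSM y), (HSM M) by (unfold a' in *; lra). unfold K.
    assert (H := HM y Hy). rewrite !HG in H by auto.
    assert (0 < (y - a)^(S m)) by (apply pow_lt; unfold a' in *; lra).
    replace (s * (hf a m U M * (M - a) ^ S m - hf a m U M * (M - a) ^ S m)) with 0 by ring.
    replace (s * (hf a m U y * (y - a) ^ S m - hf a m U M * (y - a) ^ S m)) with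
      ((s * hf a m U y - s * hf a m U M) * (y - a) ^ S m) by ring. nra. }
  assert (Hid : Rf a m U M = -(M - a) / INR (S m) * pd a m U K M).
  { apply Rf_ident. unfold a' in *; lra. unfold K. apply HSM. unfold a' in *; lra. }
  destruct (Rlt_or_le M b) as [HMb|HMb].
  - exists M. split. unfold a' in *; lra.
    assert (H0 := fermat_max a b p M _ a' b ltac:(unfold a' in *; lra) HMa HMb (Rle_refl b) (Hp M ltac:(unfold a' in *; lra)) Hpm).
    rewrite Hid. assert (pd a m U K M = 0) by nra. rewrite H. ring.
  - exfalso. assert (M = b) by lra. subst M.
    assert (H0 := endpoint_max a b p _ a' ltac:(unfold a' in *; lra) ltac:(unfold a' in *; lra) (Hp b ltac:(lra)) Hpm).
    assert (HR : s * Rf a m U b > 0).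
    { unfold Rf, taylor at 1.
      change (sum_f_R0 ?f (S m)) with (sum_f_R0 f m + f (S m)). cbv beta. fold (taylor m U b a).
      replace (U 0%nat a - (taylor m U b a + U (S m) b / INR (fact (S m)) * (a - b) ^ S m))
        with (Sf a m U b - U (S m) b / INR (fact (S m)) * (a - b) ^ S m) by (unfold Sf; ring).
      rewrite (HSM b) by lra. rewrite <- Hend.
      replace ((a - b)^(S m)) with ((-1)^(S m) * (b - a)^(S m)) by (rewrite <- Rpow_mult_distr; f_equal; ring).
      assert (0 < (b - a)^(S m)) by (apply pow_lt; lra).
      replace (s * (hf a m U b * (b - a) ^ S m - U (S m) a / INR (fact (S m)) * ((-1) ^ S m * (b - a) ^ S m)))
        with ((s * hf a m U b - s * L) * (b - a)^(S m)) by (unfold L; ring).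
      apply Rmult_lt_0_compat; lra. }
    rewrite Hid in HR.
    assert (0 < INR (S m)) by (apply lt_0_INR; lia).
    assert (0 < (b - a) / INR (S m)) by (apply Rdiv_lt_0_compat; lra).
    replace (s * (- (b - a) / INR (S m) * pd a m U K b)) with (- ((b - a) / INR (S m)) * (s * pd a m U K b)) in HR
      by (field; lra).
    nra.
Qed.
End Core.

Lemma taylor_lin k (F G : nat -> R -> R) c t x :
  taylor k (fun j y => F j y - c * G j y) t x = taylor k F t x - c * taylor k G t x.
Proof.
  induction k; unfold taylor in *. simpl. field.
  change (sum_f_R0 ?f (S k)) with (sum_f_R0 f k + f (S k)). cbv beta. rewrite IHk.
  field. apply Rgt_not_eq, fact_pos'.
Qed.

From Stdlib Require Import Classical.

Theorem mainTheorem13 (n : nat) (a b : R) (f g : R -> R) (F G : nat -> R -> R) :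
  (1 <= n)%nat -> a < b ->
  nth_derivs_on n a b f F -> nth_derivs_on n a b g G ->
  G n a <> G n b ->
  exists eta, a < eta < b /\
    f a - taylor n F eta a =
      (F n b - F n a) / (G n b - G n a) * (g a - taylor n G eta a).
Proof.
  intros Hn Hab [HF0 HF] [HG0 HG] HGn.
  destruct n as [|m]. lia.
  set (c := (F (S m) b - F (S m) a) / (G (S m) b - G (S m) a)).
  set (U := fun j y => F j y - c * G j y).
  assert (HU : forall k x, (k < S m)%nat -> a <= x <= b -> derive_within a b (U k) x (U (S k) x)).
  { intros k x Hk Hx. unfold U. apply dw_minus. auto. apply dw_scal. auto. }
  assert (Hend : U (S m) a = U (S m) b).
  { unfold U, c. field. intro E. apply HGn. lra. }
  assert (Hex : exists eta, a < eta < b /\ Rf a m U eta = 0).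
  { set (L := U (S m) a / INR (fact (S m)) * (-1)^(S m)).
    destruct (classic (exists t0, a < t0 <= b /\ 1 * hf a m U t0 > 1 * L)) as [H1|H1].
    { exact (core a b m U Hab HU Hend 1 ltac:(ring) H1). }
    destruct (classic (exists t0, a < t0 <= b /\ -1 * hf a m U t0 > -1 * L)) as [H2|H2].
    { exact (core a b m U Hab HU Hend (-1) ltac:(ring) H2). }
    assert (Heq : forall t, a < t <= b -> hf a m U t = L).
    { intros t Ht. destruct (Rtotal_order (hf a m U t) L) as [X|[X|X]]; auto; exfalso.
      apply H2. exists t. split; auto. lra. apply H1. exists t. split; auto. lra. }
    set (eta := (a + b) / 2). exists eta. split. unfold eta; lra.
    assert (HSM : forall y, a < y <= b -> Sf a m U y = L * (y - a)^(S m)).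
    { intros y Hy. rewrite <- (Heq y Hy). unfold hf. field. apply pow_nonzero. lra. }
    assert (Hd := fermat_max a b (fun y => Sf a m U y - L * (1 * (y - a))^(S m)) eta (pd a m U L eta)
       ((a + eta)/2) b ltac:(unfold eta; lra) ltac:(unfold eta; lra) ltac:(unfold eta; lra) (Rle_refl b)
       (dP a b m U HU L eta ltac:(unfold eta; lra))).
    rewrite (Rf_ident a m U L eta) by (unfold eta; try lra; apply HSM; unfold eta; lra).
    rewrite Hd. ring.
    intros y Hy. replace (1 * (y - a)) with (y - a) by ring. replace (1 * (eta - a)) with (eta - a) by ring.
    rewrite !HSM by (unfold eta in *; lra). lra. }
  destruct Hex as [eta [Heta HR]]. exists eta. split; auto.
  unfold Rf, U in HR. rewrite taylor_lin in HR.
  rewrite <- (HF0 a), <- (HG0 a) by lra. fold c. lra.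
Qed.
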